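(* Let $G$ be a graph with $n$ vertices, and let $A$ be the set of paths of length $2$ in $G$ that are not contained in any cycle of length at least $4$ in $G$. Then \[\sum_{xyz\in A}\frac1{\deg y}<\frac{3n}2,\] where the sum is over unlabeled paths (each path $xyz=zyx$ counted once) and $\deg y$ is the degree in $G$ of the middle vertex $y$. *)

(* Defs.v *)
From mathcomp Require Import all_boot all_order all_algebra.
Set Implicit Arguments. Unset Strict Implicit. Unset Printing Implicit Defensive.
Import Order.TTheory GRing.Theory Num.Theory.

(* A (finite simple) graph: vertex type T : finType with a symmetric,
   irreflexive adjacency relation e. *)

Definition deg (T : finType) (e : rel T) (y : T) : nat := #|[set w | e y w]|.

Definition path2 (T : finType) (e : rel T) (x y z : T) : bool :=
  [&& e x y, e y z & x != z].

(* Up to rotation and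
   reversal of the cycle, it can be written starting with x, y, z. *)
Definition in_long_cycle (T : finType) (e : rel T) (x y z : T) : Prop :=
  exists rest : seq T,
    [/\ 4 <= size [:: x, y, z & rest], uniq [:: x, y, z & rest]
      & cycle e [:: x, y, z & rest]].

Definition inA (T : finType) (e : rel T) (t : T * T * T) : Prop :=
  let: (x, y, z) := t in path2 e x y z /\ ~ in_long_cycle e x y z.

(* Main.v *)
Require Import Defs.
From mathcomp Require Import all_boot all_order all_algebra.
From mathcomp Require Import classical_sets boolp.
From mathcomp Require Import ring.
Import Order.TTheory GRing.Theory Num.Theory.
Set Implicit Arguments. Unset Strict Implicit. Unset Printing Implicit Defensive.

Definition er (T : finType) (e : rel T) (y x z : T) : rel T :=
  fun a b => [&& e a b, a != y, b != y &
                 ~~ (((a == x) && (b == z)) || ((a == z) && (b == x)))].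

Definition ccomp (T : finType) (e : rel T) (y x z u : T) : {set T} :=
  [set w | connect (er e y x z) u w].

Definition Bp (T : finType) (e : rel T) (x y z : T) : bool :=
  [&& e x y, e y z, x != z & ~~ connect (er e y x z) x z].

Definition Good (T : finType) (e : rel T) (x y z : T) : bool :=
  Bp e x y z && (#|ccomp e y x z x| <= #|ccomp e y x z z|).

Lemma erC (T : finType) (e : rel T) y x z : er e y x z =2 er e y z x.
Proof. by move=> a b; rewrite /er orbC. Qed.

Lemma er_sym (T : finType) (e : rel T) (esym : symmetric e) y x z :
  symmetric (er e y x z).
Proof.
move=> a b; rewrite /er esym; case: (a == y); case: (b == y) => //=.
by rewrite orbC [(b == x) && _]andbC [(b == z) && _]andbC.
Qed.

Lemma conn_sym (T : finType) (e : rel T) (esym : symmetric e) y x z a b :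
  connect (er e y x z) a b = connect (er e y x z) b a.
Proof. exact: (sym_connect_sym (er_sym esym y x z)). Qed.

Lemma conn_mono (T : finType) (e1 e2 : rel T) (S : pred T) u :
  (forall a b, S a -> e1 a b -> S b /\ e2 a b) -> S u ->
  forall w, connect e1 u w -> connect e2 u w.
Proof.
move=> H Su w /connectP [p pth ->]; elim: p u Su pth => [|a p IH] u Su /=.
  by rewrite connect0.
case/andP=> e1ua pth; have [Sa e2ua] := H _ _ Su e1ua.
exact: connect_trans (connect1 e2ua) (IH a Sa pth).
Qed.

Lemma path_ne (T : finType) (e : rel T) y x z u p :
  path (er e y x z) u p -> all (fun w => w != y) p.
Proof.
elim: p u => [|a p IH] u //= /andP [h pth].
by rewrite (IH _ pth) andbT; case/and4P: h.
Qed.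

Lemma conn_ne (T : finType) (e : rel T) y x z u w :
  u != y -> connect (er e y x z) u w -> w != y.
Proof.
move=> uy /connectP [p pth ->]; have := path_ne pth.
elim/last_ind: p pth => [|p a _] //= _; rewrite last_rcons all_rcons.
by case/andP.
Qed.


Lemma long_cycle_of_conn (T : finType) (e : rel T) (esym : symmetric e)
  (eirr : irreflexive e) x y z :
  path2 e x y z -> connect (er e y x z) x z -> in_long_cycle e x y z.
Proof.
case/and3P=> exy eyz xz /connectP [p0 pth0 zl].
have [p pth [uq lp]] : exists2 p, path (er e y x z) x p & uniq (x :: p) /\ last x p = last x p0.
  by case: (shortenP pth0) => p pth uq _; exists p.
rewrite -zl in lp; clear pth0 zl p0.
have xy : x != y by apply: contraTneq exy => ->; rewrite eirr.
have yz : y != z by apply: contraTneq eyz => ->; rewrite eirr.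
elim/last_ind: p pth uq lp => [|q a _]; first by move=> _ _ /= xz'; rewrite xz' eqxx in xz.
rewrite last_rcons => pth uq la; subst a.
have qn : size q != 0%N.
  case: q pth uq => [|b q'] //.
  by rewrite /= /er !eqxx /= andbF => /andP [/and3P []].
have ally := path_ne pth; rewrite all_rcons in ally; case/andP: ally => _ ally.
move: (uq); rewrite /= rcons_uniq mem_rcons inE negb_or => /and3P [/andP [_ xq] zq uqq].
have yq : y \notin q by apply/negP => /(allP ally); rewrite eqxx.
exists (rev q); split.
- by rewrite /= size_rev; case: (size q) qn.
- by rewrite /= !inE !mem_rev rev_uniq !negb_or xy xz yz xq yq zq uqq.
- rewrite /cycle /= exy eyz /=.
  have pe : path (fun u v => e v u) x (rcons q z).
    by apply: sub_path pth => a c /and4P [h _ _ _]; rewrite esym.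
  move: pe; rewrite -rev_path last_rcons belast_rcons rev_cons.
  by [].
Qed.


Lemma ne_of_e (T : finType) (e : rel T) (eirr : irreflexive e) a b :
  e a b -> a != b.
Proof. by apply: contraTneq => ->; rewrite eirr. Qed.

Lemma neC (T : eqType) (a b : T) : a != b -> b != a.
Proof. by rewrite eq_sym. Qed.

Lemma key_half (T : finType) (e : rel T) (esym : symmetric e)
  (eirr : irreflexive e) x y1 y2 z1 z2 :
  Bp e x y1 z1 -> e x y2 -> x != z2 -> y1 != y2 -> z1 != y2 -> z2 != y1 ->
  #|ccomp e y1 x z1 z1| < #|ccomp e y2 x z2 x|.
Proof.
case/and4P=> exy1 ey1z1 xz1 nc ey2 xz2 y12 z1y2 z2y1.
have xy1 := ne_of_e eirr exy1; have xy2 := ne_of_e eirr ey2.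
have y1z1 := ne_of_e eirr ey1z1.
have NE := (negbTE xy1, negbTE xy2, negbTE y1z1, negbTE xz1, negbTE xz2,
  negbTE y12, negbTE z1y2, negbTE z2y1, negbTE (neC xy1), negbTE (neC xy2),
  negbTE (neC y1z1), negbTE (neC xz1), negbTE (neC xz2), negbTE (neC y12),
  negbTE (neC z1y2), negbTE (neC z2y1)).
set r1 := er e y1 x z1; set r2 := er e y2 x z2.
have disj a : connect r1 x a -> connect r1 z1 a -> False.
  move=> h1 h2; move/negP: nc; apply.
  by apply: connect_trans h1 _; rewrite conn_sym.
have cy2 : connect r1 x y2.
  by apply: connect1; rewrite /r1 /er ey2 ?NE ?eqxx.
apply: proper_card; apply/properP; split.
  apply/fintype.subsetP => w; rewrite !inE => cw.
  have c1 : connect r2 x z1.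
    apply: connect_trans (connect1 (_ : r2 x y1)) (connect1 (_ : r2 y1 z1)).
      by rewrite /r2 /er exy1 ?NE ?eqxx.
    by rewrite /r2 /er ey1z1 ?NE ?eqxx.
  apply: connect_trans c1 _.
  apply: (conn_mono (S := fun a => connect r1 z1 a)) cw => // a b ca r1ab.
  have cb : connect r1 z1 b := connect_trans ca (connect1 r1ab).
  split => //.
  have nx u : connect r1 z1 u -> u != x.
    by move=> cu; apply/eqP => ux; subst u; apply: (disj x) => //.
  have ny u : connect r1 z1 u -> u != y2.
    by move=> cu; apply/eqP => ux; subst u; apply: (disj y2).
  case/and4P: r1ab => eab _ _ _.
  by rewrite /r2 /er eab ny // ny //= (negbTE (nx _ ca)) (negbTE (nx _ cb)) andbF.
exists y1; rewrite !inE.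
  by apply: connect1; rewrite /r2 /er exy1 ?NE ?eqxx.
apply/negP => /(conn_ne (neC y1z1)); by rewrite eqxx.
Qed.

Lemma key (T : finType) (e : rel T) (esym : symmetric e)
  (eirr : irreflexive e) x y1 y2 z1 z2 :
  Good e x y1 z1 -> Good e x y2 z2 -> y1 != y2 -> z1 != y2 -> z2 != y1 -> False.
Proof.
case/andP=> B1 l1 /andP [B2 l2] y12 z1y2 z2y1.
have := B1; case/and4P=> exy1 _ xz1 _.
have := B2; case/and4P=> exy2 _ xz2 _.
have h1 := key_half esym eirr B1 exy2 xz2 y12 z1y2 z2y1.
have h2 := key_half esym eirr B2 exy1 xz1 (neC y12) z2y1 z1y2.
have := leq_ltn_trans l1 h1; have := leq_ltn_trans l2 h2.
move=> a b; have := ltn_trans a b; by rewrite ltnn.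
Qed.

Lemma F2 (T : finType) (e : rel T) (esym : symmetric e)
  (eirr : irreflexive e) x y1 y2 y3 :
  Good e x y1 y2 -> Good e x y2 y3 -> e x y3 -> y3 != y1 -> False.
Proof.
case/andP=> /and4P [exy1 ey1y2 xy2 nc] _ /andP [/and4P [_ ey2y3 xy3 _] _] exy3 y31.
move/negP: nc; apply.
have xy1 := ne_of_e eirr exy1; have y23 := ne_of_e eirr ey2y3.
have y12 := ne_of_e eirr ey1y2.
have NE := (negbTE xy1, negbTE xy2, negbTE xy3, negbTE y23, negbTE y12, negbTE y31,
  negbTE (neC xy1), negbTE (neC xy2), negbTE (neC xy3), negbTE (neC y23),
  negbTE (neC y12), negbTE (neC y31)).
apply: connect_trans (connect1 (_ : er e y1 x y2 x y3)) (connect1 (_ : er e y1 x y2 y3 y2)).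
  by rewrite /er exy3 ?NE ?eqxx.
by rewrite /er esym ey2y3 ?NE ?eqxx ?andbF.
Qed.

Definition pc (T : finType) (e : rel T) x y := #|[set z | Good e x y z]|.

Lemma p_lt_d (T : finType) (e : rel T) (esym : symmetric e) x y :
  (0 < pc e x y)%N -> (pc e x y < deg e y)%N.
Proof.
rewrite /pc card_gt0 => /set0Pn [z]; rewrite inE => /andP [/and4P [exy _ _ _] _].
apply: proper_card; apply/properP; split.
  by apply/fintype.subsetP => w; rewrite !inE => /andP [/and4P []].
exists x; first by rewrite inE esym.
by rewrite inE /Good /Bp eqxx /= !andbF.
Qed.

Lemma pick_other (T : finType) (A : {set T}) a :
  (1 < #|A|)%N -> exists2 z, z \in A & z != a.
Proof.
rewrite (cardsD1 a) => h.
have : (0 < #|A :\ a|)%N by move: h; case: (a \in A); rewrite ?add1n ?add0n ?ltnS // => /ltnW.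
by rewrite card_gt0 => /set0Pn [z]; rewrite !inE => /andP [za zA]; exists z.
Qed.

Lemma pick_one (T : finType) (A : {set T}) :
  (0 < #|A|)%N -> exists z, z \in A.
Proof. by rewrite card_gt0 => /set0Pn. Qed.

Lemma two (T : finType) (e : rel T) (esym : symmetric e)
  (eirr : irreflexive e) x y1 y2 :
  y1 != y2 -> (0 < pc e x y1)%N -> (0 < pc e x y2)%N ->
  (pc e x y1 <= 1)%N \/ (pc e x y2 <= 1)%N.
Proof.
move=> y12 p1 p2.
case: (leqP (pc e x y1) 1) => h1; first by left.
case: (leqP (pc e x y2) 1) => h2; first by right.
have [z1 z1P z1n] := pick_other y2 h1.
have [z2 z2P z2n] := pick_other y1 h2.
rewrite !inE in z1P z2P.
by case: (key esym eirr z1P z2P y12 z1n z2n).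
Qed.

Lemma three (T : finType) (e : rel T) (esym : symmetric e)
  (eirr : irreflexive e) x y1 y2 y3 :
  y1 != y2 -> y1 != y3 -> y2 != y3 ->
  (0 < pc e x y1)%N -> (0 < pc e x y2)%N -> (0 < pc e x y3)%N -> False.
Proof.
move=> y12 y13 y23; rewrite /pc => /pick_one [z1 g1] /pick_one [z2 g2] /pick_one [z3 g3].
rewrite !inE in g1 g2 g3.
have ex1 : e x y1 by case/andP: g1 => /and4P [].
have ex2 : e x y2 by case/andP: g2 => /and4P [].
have ex3 : e x y3 by case/andP: g3 => /and4P [].
have K12 : z1 = y2 \/ z2 = y1.
  case: (eqVneq z1 y2) => [|a]; first by left.
  case: (eqVneq z2 y1) => [|b]; first by right.
  by case: (key esym eirr g1 g2 y12 a b).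
have K13 : z1 = y3 \/ z3 = y1.
  case: (eqVneq z1 y3) => [|a]; first by left.
  case: (eqVneq z3 y1) => [|b]; first by right.
  by case: (key esym eirr g1 g3 y13 a b).
have K23 : z2 = y3 \/ z3 = y2.
  case: (eqVneq z2 y3) => [|a]; first by left.
  case: (eqVneq z3 y2) => [|b]; first by right.
  by case: (key esym eirr g2 g3 y23 a b).
case: K12 => E12; case: K13 => E13; case: K23 => E23; subst.
all: first [ by rewrite eqxx in y12 | by rewrite eqxx in y13 | by rewrite eqxx in y23
  | apply: (F2 esym eirr g1 g2 ex3) | apply: (F2 esym eirr g1 g3 ex2)
  | apply: (F2 esym eirr g2 g1 ex3) | apply: (F2 esym eirr g2 g3 ex1)
  | apply: (F2 esym eirr g3 g1 ex2) | apply: (F2 esym eirr g3 g2 ex1) ];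
  by rewrite // eq_sym.
Qed.


Local Open Scope ring_scope.

Definition hh (R : realFieldType) (T : finType) (e : rel T) x y : R :=
  (pc e x y)%:R / (deg e y)%:R.

Lemma hh_ge0 (R : realFieldType) (T : finType) (e : rel T) x y : 0 <= hh R e x y.
Proof. by rewrite /hh divr_ge0 ?ler0n. Qed.

Lemma hh0 (R : realFieldType) (T : finType) (e : rel T) x y :
  pc e x y = 0%N -> hh R e x y = 0.
Proof. by rewrite /hh => ->; rewrite mul0r. Qed.

Lemma hh_lt1 (R : realFieldType) (T : finType) (e : rel T) (esym : symmetric e) x y :
  (0 < pc e x y)%N -> hh R e x y < 1.
Proof.
move=> p0; have pd := p_lt_d esym p0.
have d0 : (0 < deg e y)%N by apply: leq_trans pd.
by rewrite /hh ltr_pdivrMr ?ltr0n // mul1r ltr_nat.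
Qed.

Lemma hh_le_half (R : realFieldType) (T : finType) (e : rel T) (esym : symmetric e) x y :
  (0 < pc e x y)%N -> (pc e x y <= 1)%N -> hh R e x y <= 2%:R^-1.
Proof.
move=> p0 p1; have pd := p_lt_d esym p0.
have d0 : (0 < deg e y)%N by apply: leq_trans pd.
have p1' : pc e x y = 1%N by apply/eqP; rewrite eqn_leq p1 p0.
rewrite /hh ler_pdivrMr ?ltr0n // p1' ler_pdivlMl ?ltr0n // mulr1 ler_nat.
by rewrite p1' in pd.
Qed.

Lemma per_x (R : realFieldType) (T : finType) (e : rel T) (esym : symmetric e)
  (eirr : irreflexive e) x :
  \sum_y hh R e x y < 3%:R / 2%:R.
Proof.
have h32 : (3%:R / 2%:R : R) = 1 + 2%:R^-1.
  by rewrite -[3%N]/(2 + 1)%N natrD mulrDl divff ?pnatr_eq0 // mul1r addrC.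
case: (pickP (fun y => 0 < pc e x y)%N) => [y0 py0|none]; last first.
  rewrite big1 ?divr_gt0 ?ltr0n // => y _.
  by apply: hh0; move: (none y) => /=; case: (pc e x y).
rewrite (bigD1 y0) //=.
case: (pickP (fun y => (y != y0) && (0 < pc e x y)%N)) => [y1 /andP [y10 py1]|none]; last first.
  rewrite big1 ?addr0.
    by rewrite h32; apply: lt_le_trans (hh_lt1 R esym py0) _; rewrite lerDl invr_ge0 ler0n.
  move=> y yy0; apply: hh0; move: (none y) => /=; rewrite yy0 /=; by case: (pc e x y).
rewrite (bigD1 y1) //= big1 ?addr0.
  rewrite h32; case: (two esym eirr (neC y10) py0 py1) => le1.
    rewrite addrC; apply: ltr_leD; first exact: hh_lt1.
    exact: hh_le_half.
  apply: ltr_leD; first exact: hh_lt1.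
  exact: hh_le_half.
move=> y /andP [yy0 yy1]; apply: hh0.
case: (posnP (pc e x y)) => // py.
by case: (three esym eirr (neC y10) (neC yy0) (neC yy1) py0 py1 py).
Qed.


Lemma inA_good (T : finType) (e : rel T) (esym : symmetric e) (eirr : irreflexive e) x y z :
  inA e (x, y, z) -> Good e x y z || Good e z y x.
Proof.
case=> p2 nlc.
have B1 : Bp e x y z.
  rewrite /Bp; case/and3P: (p2) => -> -> -> /=; apply/negP => c.
  by apply: nlc; apply: long_cycle_of_conn.
have B2 : Bp e z y x.
  case/and4P: (B1) => exy eyz xz nc.
  rewrite /Bp esym eyz esym exy eq_sym xz /=.
  by rewrite -(eq_connect (erC e y x z)) conn_sym.
have E u : ccomp e y z x u = ccomp e y x z u.
  by apply/setP => w; rewrite !inE (eq_connect (erC e y x z)).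
rewrite /Good B1 B2 /= !E.
by case: leqP => //= /ltnW ->.
Qed.

Lemma sum_triple (R : realFieldType) (T : finType) (F : T * T * T -> R) :
  \sum_t F t = \sum_x \sum_y \sum_z F (x, y, z).
Proof.
transitivity (\sum_(a : T * T) \sum_z F (a, z)).
  by rewrite pair_bigA; apply: eq_bigr => -[a z].
by rewrite (pair_bigA _ (fun x y => \sum_z F (x, y, z))); apply: eq_bigr => -[x y].
Qed.

Lemma good_sum (R : realFieldType) (T : finType) (e : rel T) :
  \sum_(t : T * T * T) (if Good e t.1.1 t.1.2 t.2 then ((deg e t.1.2)%:R)^-1 else 0 : R)
  = \sum_x \sum_y hh R e x y.
Proof.
rewrite sum_triple; apply: eq_bigr => x _; apply: eq_bigr => y _ /=.
rewrite -big_mkcond /= /hh /pc.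
rewrite (eq_bigl (fun z => z \in [set z | Good e x y z])); last by move=> z; rewrite inE.
by rewrite sumr_const [RHS]mulrC mulr_natr.
Qed.

Unset Implicit Arguments.
Theorem proposition3p5 (R : realFieldType) (T : finType) (e : rel T)
  (e_sym : symmetric e) (e_irr : irreflexive e) (n_pos : (0 < #|T|)%N) :
  2^-1 * (\sum_(t : T * T * T | `[< inA e t >]) ((deg e t.1.2)%:R)^-1 : R)
    < 3%:R * (#|T|)%:R / 2%:R.
Proof.
set f := fun t : T * T * T => ((deg e t.1.2)%:R)^-1 : R.
set G := \sum_(t : T * T * T) (if Good e t.1.1 t.1.2 t.2 then f t else 0).
have step1 : \sum_(t | `[< inA e t >]) f t <= G + G.
  have E : G = \sum_(t : T * T * T) (if Good e t.2 t.1.2 t.1.1 then f t else 0).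
    rewrite /G (reindex_inj (h := fun t : T * T * T => (t.2, t.1.2, t.1.1))) /=.
      by apply: eq_bigr => -[[x y] z].
    by move=> [[a b] c] [[a' b'] c'] /= [-> -> ->].
  rewrite {2}E.
  rewrite big_mkcond -big_split /=; apply: ler_sum => -[[x y] z] _ /=.
  have f0 : 0 <= f (x, y, z) by rewrite /f invr_ge0 ler0n.
  case: asboolP => hA; last by rewrite addr_ge0 //; case: ifP.
  case/orP: (inA_good e_sym e_irr hA) => -> /=.
    by rewrite lerDl; case: ifP.
  by rewrite lerDr; case: ifP.
have GE : G = \sum_x \sum_y hh R e x y by rewrite /G /f good_sum.
have step2 : \sum_x \sum_y hh R e x y < \sum_(x : T) (3%:R / 2%:R : R).
  apply: ltr_sum; first by case/card_gt0P: n_pos => x _; apply/hasP; exists x; rewrite ?mem_index_enum.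
  by move=> x _; apply: per_x.
rewrite sumr_const in step2.
apply: le_lt_trans (_ : _ <= 2^-1 * (G + G)) _.
  by rewrite ler_pM2l ?invr_gt0 ?ltr0n.
have -> : 2^-1 * (G + G) = G.
  by field.
have -> : 3%:R * (#|T|)%:R / 2%:R = (3%:R / 2%:R : R) *+ #|T|.
  by rewrite -(mulr_natr (3%:R / 2%:R) #|T|); field.
by rewrite GE.
Qed.
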